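(* Let $v\geq 7$ be an integer with $v\equiv 1$ or $7\pmod{14}$. Then $K^*_v$ has a $D_i$-decomposition for every $i\in[1,7]$.
   Context: $K^*_v$ denotes the complete symmetric digraph of order $v$: it has $v$ vertices and contains both arcs $(x,y)$ and $(y,x)$ for every pair of distinct vertices $x,y$. A $D$-decomposition of a digraph $K$ is a set of subdigraphs of $K$, each isomorphic to $D$, such that every arc of $K$ lies in exactly one of them. For distinct vertices $v_0,\dots,v_6$, the digraphs $D_i[v_0,v_1,\dots,v_6]$ ($i\in[1,7]$) all have vertex set $\{v_0,\dots,v_6\}$ and the following arc sets: $D_1$: $(v_1,v_0),(v_1,v_2),(v_2,v_3),(v_3,v_4),(v_4,v_5),(v_5,v_6),(v_6,v_0)$; $D_2$: $(v_1,v_0),(v_2,v_1),(v_2,v_3),(v_3,v_4),(v_4,v_5),(v_5,v_6),(v_6,v_0)$; $D_3$: $(v_1,v_0),(v_1,v_2),(v_3,v_2),(v_3,v_4),(v_4,v_5),(v_5,v_6),(v_6,v_0)$; $D_4$: $(v_1,v_0),(v_1,v_2),(v_2,v_3),(v_4,v_3),(v_4,v_5),(v_5,v_6),(v_6,v_0)$; $D_5$: $(v_1,v_0),(v_2,v_1),(v_3,v_2),(v_3,v_4),(v_4,v_5),(v_5,v_6),(v_6,v_0)$; $D_6$: $(v_1,v_0),(v_2,v_1),(v_2,v_3),(v_3,v_4),(v_5,v_4),(v_5,v_6),(v_6,v_0)$; $D_7$: $(v_1,v_0),(v_1,v_2),(v_3,v_2),(v_3,v_4),(v_4,v_5),(v_6,v_5),(v_6,v_0)$.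 $D_i$ also denotes the isomorphism type of $D_i[v_0,\dots,v_6]$. *)

(* Defs.v *)
From mathcomp Require Import all_boot.
Set Implicit Arguments. Unset Strict Implicit. Unset Printing Implicit Defensive.

Definition Darcs {T : Type} (i : nat) (v0 v1 v2 v3 v4 v5 v6 : T) : seq (T * T) :=
  match i with
  | 1 => [:: (v1,v0); (v1,v2); (v2,v3); (v3,v4); (v4,v5); (v5,v6); (v6,v0)]
  | 2 => [:: (v1,v0); (v2,v1); (v2,v3); (v3,v4); (v4,v5); (v5,v6); (v6,v0)]
  | 3 => [:: (v1,v0); (v1,v2); (v3,v2); (v3,v4); (v4,v5); (v5,v6); (v6,v0)]
  | 4 => [:: (v1,v0); (v1,v2); (v2,v3); (v4,v3); (v4,v5); (v5,v6); (v6,v0)]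
  | 5 => [:: (v1,v0); (v2,v1); (v3,v2); (v3,v4); (v4,v5); (v5,v6); (v6,v0)]
  | 6 => [:: (v1,v0); (v2,v1); (v2,v3); (v3,v4); (v5,v4); (v5,v6); (v6,v0)]
  | 7 => [:: (v1,v0); (v1,v2); (v3,v2); (v3,v4); (v4,v5); (v6,v5); (v6,v0)]
  | _ => [::]
  end.

Definition block_arcs (v i : nat) (b : 7.-tuple 'I_v) : seq ('I_v * 'I_v) :=
  Darcs i (tnth b (inord 0)) (tnth b (inord 1)) (tnth b (inord 2))
          (tnth b (inord 3)) (tnth b (inord 4)) (tnth b (inord 5))
          (tnth b (inord 6)).

(* K*_v has vertex set 'I_v and arcs (x,y) for all x != y. *)
Definition has_D_decomposition (v i : nat) : Prop :=
  exists B : seq (7.-tuple 'I_v),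
    (forall b, b \in B -> uniq b) /\
    (forall x y : 'I_v, x != y ->
       count (fun b => (x, y) \in block_arcs i b) B = 1).

(* Main.v *)
Require Import Defs.
From mathcomp Require Import all_boot zify.
Set Implicit Arguments. Unset Strict Implicit. Unset Printing Implicit Defensive.


Definition succ7 (t : nat) : nat := if t == 6 then 0 else t.+1.
Definition orl (i : nat) : seq nat :=
  match i with 1 => [::0] | 2 => [::0;1] | 3 => [::0;2] | 4 => [::0;3]
  | 5 => [::0;1;2] | 6 => [::0;1;4] | _ => [::0;2;5] end.
Definition ori (i t : nat) : bool := t \in orl i.
Definition src (i t : nat) : nat := if ori i t then succ7 t else t.
Definition dst (i t : nat) : nat := if ori i t then t else succ7 t.
Definition arcf (T : Type) (i : nat) (w : nat -> T) (t : nat) : T * T :=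
  (w (src i t), w (dst i t)).

Lemma Darcs_map (T : Type) i (w : nat -> T) : 1 <= i <= 7 ->
  Darcs i (w 0) (w 1) (w 2) (w 3) (w 4) (w 5) (w 6) = map (arcf i w) (iota 0 7).
Proof. by case: i => [|[|[|[|[|[|[|[|i]]]]]]]]. Qed.

Lemma src_lt i t : t < 7 -> src i t < 7.
Proof. by rewrite /src /succ7; do 7?[case: t => [|t]] => //; case: ifP. Qed.
Lemma dst_lt i t : t < 7 -> dst i t < 7.
Proof. by rewrite /dst /succ7; do 7?[case: t => [|t]] => //; case: ifP. Qed.

Lemma sd_inj i t t' : t < 7 -> t' < 7 -> src i t = src i t' -> dst i t = dst i t' -> t = t'.
Proof.
rewrite /src /dst.
case: (ori i t); case: (ori i t');
by do 7?[case: t => [|t]] => //; do 7?[case: t' => [|t']].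
Qed.

Definition ordv (n x : nat) : 'I_n.+1 := inord (x %% n.+1).

Lemma ordvE n a (x : 'I_n.+1) : (ordv n a == x) = (a %% n.+1 == x).
Proof. by rewrite -val_eqE /= inordK // ltn_pmod. Qed.

Definition mkblk (n : nat) (P : nat -> nat) : 7.-tuple 'I_n.+1 :=
  [tuple ordv n (P t) | t < 7].

Lemma blk_arcs n P i : 1 <= i <= 7 ->
  block_arcs i (mkblk n P) = map (arcf i (fun t => ordv n (P t))) (iota 0 7).
Proof.
move=> Hi; rewrite /block_arcs /mkblk !tnth_mktuple !inordK //.
exact: (Darcs_map (fun t => ordv n (P t))).
Qed.

Lemma blk_uniq n P : (forall a b, a < 7 -> b < 7 -> P a %% n.+1 = P b %% n.+1 -> a = b) ->
  uniq (mkblk n P).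
Proof.
move=> H; apply/tuple_uniqP => a b; rewrite !tnth_mktuple => /eqP.
rewrite ordvE inordK ?ltn_pmod // => /eqP E; apply: val_inj; exact: H (ltn_ord a) (ltn_ord b) E.
Qed.

Lemma cnt_sum (T : Type) (a : pred T) s : count a s = \sum_(x <- s) a x.
Proof. by elim: s => [|x s IH]; rewrite ?big_nil ?big_cons //= IH. Qed.

Lemma cnt_flat (T : Type) (a : pred T) ss : count a (flatten ss) = \sum_(s <- ss) count a s.
Proof. by rewrite count_flatten sumnE big_map. Qed.

Lemma blk_cnt (T : eqType) i (w : nat -> T) z :
  (forall a b, a < 7 -> b < 7 -> w a = w b -> a = b) ->
  (z \in map (arcf i w) (iota 0 7)) = \sum_(t <- iota 0 7) (arcf i w t == z) :> nat.
Proof.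
move=> Hw.
have U : uniq (map (arcf i w) (iota 0 7)).
  rewrite map_inj_in_uniq ?iota_uniq // => t t'; rewrite !mem_iota /= /arcf => Ht Ht' [E1 E2].
  apply: (sd_inj (i:=i)) => //; apply: Hw => //; by [apply: src_lt | apply: dst_lt].
rewrite -(count_uniq_mem _ U) count_map -cnt_sum.
by apply: eq_count => t /=.
Qed.


Lemma sum_pred1 (s : seq nat) a : uniq s -> a \in s -> \sum_(x <- s) (x == a) = 1.
Proof.
move=> U H; rewrite -(cnt_sum (pred1 a)).
by rewrite (count_uniq_mem _ U) H.
Qed.

Lemma cnt_shift n c (x : 'I_n.+1) :
  \sum_(s <- iota 0 n.+1) ((c + s) %% n.+1 == x) = 1.
Proof.
set v := n.+1.
have xv : x < v by [].
set s0 := (x + (v - c %% v)) %% v.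
have s0v : s0 < v by rewrite ltn_pmod.
have cs0 : (c + s0) %% v = x.
  rewrite /s0 modnDmr -modnDml.
  have cv : c %% v < v by rewrite ltn_pmod.
  have -> : c %% v + (x + (v - c %% v)) = x + v by lia.
  by rewrite modnDr modn_small.
rewrite -(sum_pred1 (iota_uniq 0 v) (_ : s0 \in iota 0 v)); last by rewrite mem_iota.
rewrite big_seq [RHS]big_seq; apply: eq_bigr => s; rewrite mem_iota /= => Hs.
congr nat_of_bool; apply/eqP/eqP => [E|->//].
have : (c + s == c + s0 %[mod v]) by rewrite E cs0.
by rewrite eqn_modDl !modn_small // => /eqP.
Qed.

Lemma shift_sum n (c c' W : nat) (x y : 'I_n.+1) : (c + W) %% n.+1 = c' %% n.+1 ->
  \sum_(s <- iota 0 n.+1) ((ordv n (c + s), ordv n (c' + s)) == (x, y)) = ((x + W) %% n.+1 == y).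
Proof.
move=> H.
have E : forall s, ((ordv n (c + s), ordv n (c' + s)) == (x, y)) =
   ((c + s) %% n.+1 == x) && ((x + W) %% n.+1 == y).
  move=> s; rewrite xpair_eqE !ordvE; case: eqP => //= Hx.
  rewrite -modnDml -H modnDml -addnA (addnC W) addnA -modnDml Hx.
  done.
under eq_bigr => s _ do rewrite E.
case: ((x + W) %% n.+1 == y).
  rewrite -[RHS](@cnt_shift n c x); apply: eq_bigr => s _; by rewrite andbT.
by rewrite big1 // => s _; rewrite andbF.
Qed.


Definition cycB n K (P : nat -> bool -> nat -> nat) : seq (7.-tuple 'I_n.+1) :=
  flatten [seq flatten [seq [seq mkblk n (fun t => P j sg t + s) | s <- iota 0 n.+1]
                       | sg <- [:: false; true]] | j <- iota 0 K].

Lemma cnt_map (T U : Type) (a : pred U) (f : T -> U) s : count a (map f s) = \sum_(x <- s) a (f x).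
Proof. by rewrite count_map cnt_sum. Qed.

Lemma cyc_count n K (P : nat -> bool -> nat -> nat) (FW BW : nat -> nat -> nat) i (x y : 'I_n.+1) :
  1 <= i <= 7 ->
  (forall j sg a b, j < K -> a < 7 -> b < 7 -> P j sg a %% n.+1 = P j sg b %% n.+1 -> a = b) ->
  (forall j t, j < K -> t < 7 ->
     [/\ (P j false t + FW j t) %% n.+1 = P j false (succ7 t) %% n.+1,
         (P j false (succ7 t) + BW j t) %% n.+1 = P j false t %% n.+1,
         (P j true t + BW j t) %% n.+1 = P j true (succ7 t) %% n.+1 &
         (P j true (succ7 t) + FW j t) %% n.+1 = P j true t %% n.+1]) ->
  count (fun b => (x,y) \in block_arcs i b) (cycB n K P) =
  \sum_(j <- iota 0 K) \sum_(t <- iota 0 7)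
      (((x + FW j t) %% n.+1 == y) + ((x + BW j t) %% n.+1 == y)).
Proof.
move=> Hi Hinj Hw.
rewrite /cycB cnt_flat big_map big_seq [RHS]big_seq. apply: eq_bigr => j.
rewrite mem_iota add0n => /andP[_ Hj].
rewrite cnt_flat big_map.
have Hb : forall sg s, ((x, y) \in block_arcs i (mkblk n (fun t => P j sg t + s))) =
   \sum_(t <- iota 0 7) (arcf i (fun t => ordv n (P j sg t + s)) t == (x, y)) :> nat.
  move=> sg s; rewrite blk_arcs // blk_cnt // => a b Ha Hb' /eqP.
  rewrite ordvE inordK ?ltn_pmod // => /eqP E.
  apply: (Hinj j sg a b Hj Ha Hb').
  by apply/eqP; rewrite -(eqn_modDr s); apply/eqP.
have Hs : forall sg, count (fun b => (x,y) \in block_arcs i b)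
      [seq mkblk n (fun t => P j sg t + s) | s <- iota 0 n.+1]
   = \sum_(t <- iota 0 7) ((x + (if ori i t then (if sg then FW j t else BW j t)
                  else (if sg then BW j t else FW j t))) %% n.+1 == y).
  move=> sg; rewrite cnt_map; under eq_bigr => s _ do rewrite Hb.
  rewrite exchange_big big_seq [RHS]big_seq; apply: eq_bigr => t; rewrite mem_iota add0n => /andP[_ Ht].
  rewrite /arcf; apply: shift_sum.
  have [H1 H2 H3 H4] := Hw j t Hj Ht.
  by rewrite /src /dst; case: (ori i t); case: sg.
rewrite big_cons big_seq1 !Hs -big_split /=.
by apply: eq_bigr => t _; case: (ori i t) => //; exact: addnC.
Qed.


Definition k7B n m (Q : seq (seq nat)) : seq (7.-tuple 'I_n.+1) :=
  flatten [seq [seq mkblk n (fun t => s + m * nth 0 q t) | q <- Q] | s <- iota 0 m].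

Definition qok (q : seq nat) := (size q == 7) && uniq q && all (fun a => a < 7) q.

Lemma bnd m s c : s < m -> c < 7 -> s + m * c < 7 * m.
Proof. move=> Hs Hc; have : m * c <= m * 6 by rewrite leq_mul2l; lia. lia. Qed.

Lemma decomp m s a x : s < m -> (s + m * a == x) = (s == x %% m) && (a == x %/ m).
Proof.
move=> Hs; have m0 : 0 < m by lia.
apply/eqP/andP => [<-|[/eqP -> /eqP ->]].
  by rewrite addnC mulnC modnMDl modn_small // divnMDl // divn_small // addn0.
by rewrite mulnC addnC -divn_eq.
Qed.

Lemma sum_sel m a (D : bool) : a < m -> \sum_(s <- iota 0 m) ((s == a) && D) = D.
Proof.
move=> Ha; case: D.
  under eq_bigr => s _ do rewrite andbT.
  by rewrite sum_pred1 ?iota_uniq // mem_iota.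
by rewrite big1 // => s _; rewrite andbF.
Qed.

Lemma exch (T U : Type) (r1 : seq T) (r2 : seq U) (F : T -> U -> nat) :
  \sum_(a <- r1) \sum_(b <- r2) F a b = \sum_(b <- r2) \sum_(a <- r1) F a b.
Proof. exact: exchange_big. Qed.

Lemma k7_count n m i Q (x y : 'I_n.+1) : n.+1 = 7 * m -> 1 <= i <= 7 -> all qok Q ->
  count (fun b => (x,y) \in block_arcs i b) (k7B n m Q) =
  \sum_(q <- Q) \sum_(t <- iota 0 7)
     ((x %% m == y %% m) && (arcf i (nth 0 q) t == (x %/ m, y %/ m))).
Proof.
move=> Hv Hi HQ.
have m0 : 0 < m by lia.
rewrite /k7B cnt_flat big_map.
under eq_bigr => s _ do rewrite cnt_map.
rewrite exch big_seq [RHS]big_seq; apply: eq_bigr => q Hq.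
have /andP[/andP[/eqP sq uq] aq] : qok q by move/allP: HQ; apply.
have qlt : forall t, t < 7 -> nth 0 q t < 7.
  by move=> t Ht; apply: (allP aq); rewrite mem_nth // sq.
rewrite big_seq.
under eq_bigr => s.
  rewrite mem_iota add0n => /andP[_ Hs].
  rewrite blk_arcs // blk_cnt; last first.
    move=> a b Ha Hb /eqP; rewrite ordvE inordK ?ltn_pmod // !Hv.
    rewrite !modn_small ?bnd ?qlt // => /eqP.
    move=> /eqP; rewrite eqn_add2l eqn_mul2l (negbTE (lt0n_neq0 m0)) /= => /eqP E.
    by apply/eqP; rewrite -(nth_uniq 0 _ _ uq) ?sq // E.
  over.
rewrite -big_seq exch big_seq [RHS]big_seq; apply: eq_bigr => t.
rewrite mem_iota add0n => /andP[_ Ht].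
have sv : src i t < 7 by apply: src_lt.
have dv : dst i t < 7 by apply: dst_lt.
rewrite big_seq.
under eq_bigr => s Hs.
  have Hs' : s < m by move: Hs; rewrite mem_iota add0n => /andP[_ ].
  have B1 : s + m * nth 0 q (src i t) < n.+1 by rewrite Hv bnd ?qlt.
  have B2 : s + m * nth 0 q (dst i t) < n.+1 by rewrite Hv bnd ?qlt.
  rewrite /arcf xpair_eqE !ordvE !modn_small // !decomp //.
  have -> : [&& (s == x %% m) && (nth 0 q (src i t) == x %/ m), s == y %% m
            & nth 0 q (dst i t) == y %/ m] =
     (s == x %% m) && ((x %% m == y %% m) && (arcf i (nth 0 q) t == (x %/ m, y %/ m))).
    rewrite /arcf xpair_eqE; case: (s =P x %% m) => [<-|] //=.
    by case: (s == y %% m); case: (_ == _); case: (_ == _).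
  over.
rewrite -big_seq sum_sel ?ltn_pmod //.
Qed.


Lemma iotaSr k : iota 0 k.+1 = iota 0 k ++ [:: k].
Proof. by rewrite -addn1 iotaD. Qed.

Lemma S1 c d k : \sum_(j <- iota 0 k) (c + j == d) = ((c <= d) && (d < c + k)).
Proof. elim: k => [|k IH]; first by rewrite big_nil; lia.
by rewrite iotaSr big_cat big_seq1 IH /=; lia. Qed.

Lemma S2 c d k : k <= c -> \sum_(j <- iota 0 k) (c - j == d) = ((c - k < d) && (d <= c)).
Proof. elim: k => [|k IH] H; first by rewrite big_nil; lia.
by rewrite iotaSr big_cat big_seq1 IH /=; lia. Qed.

Lemma S3 c d k : \sum_(j <- iota 0 k) (c + 2 * j == d) = [&& c <= d, d < c + 2 * k & ~~ odd (d - c)].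
Proof. elim: k => [|k IH]; first by rewrite big_nil; lia.
by rewrite iotaSr big_cat big_seq1 IH /=; lia. Qed.

Lemma S4 c d k : 2 * k <= c -> \sum_(j <- iota 0 k) (c - 2 * j == d) = [&& c - 2 * k < d, d <= c & ~~ odd (c - d)].
Proof. elim: k => [|k IH] H; first by rewrite big_nil; lia.
by rewrite iotaSr big_cat big_seq1 IH /=; lia. Qed.


Lemma modE a b v : a = b \/ a = b + v -> a %% v = b %% v.
Proof. by case=> ->; rewrite ?modnDr. Qed.

Definition PA (k j : nat) (sg : bool) (t : nat) : nat :=
  if sg then
    match t with 0 => 0 | 1 => 6*k+2+2*j | 2 => 6*k+1+j | 3 => 5*k | 4 => 2*k-1-j
    | 5 => 4*k | _ => 8*k+1+j end
  else
    match t with 0 => 0 | 1 => 8*k-1-2*j | 2 => 8*k-j | 3 => 9*k+1 | 4 => 12*k+2+j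
    | 5 => 10*k+1 | _ => 6*k-j end.
Definition FWA (k j t : nat) : nat :=
  match t with 0 => (8*k-1) - 2*j | 1 => 1 + j | 2 => (1+k)+j | 3 => (1+3*k)+j
  | 4 => 12*k - j | 5 => 10*k - j | _ => (8*k+1) + j end.
Definition BWA (k j t : nat) : nat :=
  match t with 0 => (6*k+2) + 2*j | 1 => 14*k - j | 2 => 13*k - j | 3 => 11*k - j
  | 4 => (2*k+1) + j | 5 => (4*k+1) + j | _ => 6*k - j end.

Lemma PA_inj k j sg a b : 0 < k -> j < k -> a < 7 -> b < 7 ->
  PA k j sg a %% (14*k).+1 = PA k j sg b %% (14*k).+1 -> a = b.
Proof.
move=> k0 Hj Ha Hb.
have Hl : forall c, c < 7 -> PA k j sg c < (14*k).+1.
  by move=> c Hc; case: sg; do 7?[case: c Hc => [|c] Hc] => /=; lia.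
rewrite !modn_small ?Hl //.
by move: Hl; case: sg => _; do 7?[case: a Ha => [|a] Ha]; do 7?[case: b Hb => [|b] Hb] => //=; lia.
Qed.

Lemma PA_edge k j t : 0 < k -> j < k -> t < 7 ->
  [/\ (PA k j false t + FWA k j t) %% (14*k).+1 = PA k j false (succ7 t) %% (14*k).+1,
      (PA k j false (succ7 t) + BWA k j t) %% (14*k).+1 = PA k j false t %% (14*k).+1,
      (PA k j true t + BWA k j t) %% (14*k).+1 = PA k j true (succ7 t) %% (14*k).+1 &
      (PA k j true (succ7 t) + FWA k j t) %% (14*k).+1 = PA k j true t %% (14*k).+1].
Proof.
move=> k0 Hj Ht.
by do 7?[case: t Ht => [|t] Ht] => //; split; apply: modE => /=; lia.
Qed.

Lemma bsplit (T : Type) (r : seq T) (F G : T -> nat) :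
  \sum_(x <- r) (F x + G x) = \sum_(x <- r) F x + \sum_(x <- r) G x.
Proof. exact: big_split. Qed.

Ltac solve_bools := repeat match goal with
 | |- context [nat_of_bool ?b] =>
    lazymatch b with true => fail | false => fail | _ =>
     first [ rewrite (_ : b = true); last by lia | rewrite (_ : b = false); last by lia ] end
 end.

Lemma sumA k d : 0 < k -> 0 < d < (14*k).+1 ->
  \sum_(j <- iota 0 k) \sum_(t <- iota 0 7) ((FWA k j t == d) + (BWA k j t == d)) = 1.
Proof.
move=> k0 Hd.
rewrite exch !big_cons big_nil addn0 !bsplit; cbv beta iota delta [FWA BWA].
rewrite !S1 !S2 ?S3 ?S4; last (try (match goal with |- is_true (_ <= _) => lia end)); try (match goal with |- is_true (_ <= _) => lia end).
have : d <= k \/ (k < d <= 2*k) \/ (2*k < d <= 3*k) \/ (3*k < d <= 4*k) \/ (4*k < d <= 5*k) \/ (5*k < d <= 6*k) \/ (6*k < d <= 8*k) \/ (8*k < d <= 9*k) \/ (9*k < d <= 10*k) \/ (10*k < d <= 11*k) \/ (11*k < d <= 12*k) \/ (12*k < d <= 13*k) \/ 13*k < d by lia.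
case: (boolP (odd d)) => Hodd.
  by case=> [H|[H|[H|[H|[H|[H|[H|[H|[H|[H|[H|[H|H]]]]]]]]]]]]; solve_bools.
by case=> [H|[H|[H|[H|[H|[H|[H|[H|[H|[H|[H|[H|H]]]]]]]]]]]]; solve_bools.
Qed.


Definition K7 (i : nat) : seq (seq nat) :=
  match i with
  | 1 => [:: [::1;0;2;3;4;5;6]; [::1;2;0;3;6;5;4]; [::1;3;0;4;6;2;5]; [::3;1;4;2;6;0;5]; [::2;1;5;0;6;4;3]; [::0;1;6;3;5;2;4]]
  | 2 => [:: [::1;0;2;3;4;5;6]; [::1;2;0;3;6;5;4]; [::1;3;6;0;4;2;5]; [::2;6;1;4;0;5;3]; [::6;0;1;3;5;2;4]; [::0;5;1;2;6;4;3]]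
  | 3 => [:: [::1;0;2;3;4;5;6]; [::1;2;3;0;4;6;5]; [::1;3;5;0;6;2;4]; [::0;1;2;5;3;6;4]; [::0;6;3;1;4;2;5]; [::0;2;6;1;5;4;3]]
  | 4 => [:: [::1;0;2;3;4;5;6]; [::1;2;0;3;6;5;4]; [::1;3;0;4;6;2;5]; [::2;1;3;6;4;0;5]; [::6;1;4;2;3;5;0]; [::4;2;6;0;1;5;3]]
  | 5 => [:: [::1;0;2;3;4;5;6]; [::1;2;0;3;6;5;4]; [::1;3;0;4;6;2;5]; [::3;6;2;1;5;0;4]; [::3;2;4;1;6;0;5]; [::4;6;0;1;3;5;2]]
  | 6 => [:: [::1;0;2;3;4;5;6]; [::1;2;0;3;5;6;4]; [::1;3;6;0;4;2;5]; [::2;3;4;0;5;1;6]; [::6;0;1;4;2;5;3]; [::0;3;1;2;6;4;5]]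
  | _ => [:: [::1;0;2;3;4;5;6]; [::1;2;3;0;4;6;5]; [::1;3;5;0;6;2;4]; [::0;1;2;5;4;3;6]; [::0;5;3;1;6;4;2]; [::6;2;5;1;4;0;3]]
  end.

Definition k7chk (i : nat) : bool :=
  all qok (K7 i) &&
  all (fun a => all (fun b => (a == b) ||
     (sumn [seq count (fun t => arcf i (nth 0 q) t == (a, b)) (iota 0 7) | q <- K7 i] == 1))
     (iota 0 7)) (iota 0 7).

Lemma k7chk_ok i : 1 <= i <= 7 -> k7chk i.
Proof. by case: i => [|[|[|[|[|[|[|[|i]]]]]]]]; vm_compute. Qed.

Lemma k7_one i a b : 1 <= i <= 7 -> a < 7 -> b < 7 -> a != b ->
  \sum_(q <- K7 i) \sum_(t <- iota 0 7) (arcf i (nth 0 q) t == (a, b)) = 1.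
Proof.
move=> Hi Ha Hb Hab.
have /andP[_ /allP H] := k7chk_ok Hi.
have Ha' : a \in iota 0 7 by rewrite mem_iota.
have Hb' : b \in iota 0 7 by rewrite mem_iota.
have /allP H' := H a Ha'.
have := H' b Hb'; rewrite (negbTE Hab) orFb => /eqP E; rewrite -[RHS]E.
by rewrite sumnE big_map; apply: eq_bigr => q _; rewrite cnt_sum.
Qed.


Definition PB (k j : nat) (sg : bool) (t : nat) : nat :=
  if sg then
    match t with 0 => 0 | 1 => 6*k+4+2*j | 2 => 6*k+3+j | 3 => 5*k+2 | 4 => 7*k+4+j
    | 5 => 4*k+2 | _ => 8*k+5+j end
  else
    match t with 0 => 0 | 1 => 8*k+3-2*j | 2 => 8*k+4-j | 3 => 9*k+5 | 4 => 7*k+3-j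
    | 5 => 10*k+5 | _ => 6*k+2-j end.
Definition FWB (k j t : nat) : nat :=
  match t with 0 => (8*k+3) - 2*j | 1 => 1 + j | 2 => (1+k)+j | 3 => (12*k+5)-j
  | 4 => (2+3*k)+j | 5 => (10*k+4) - j | _ => (8*k+5) + j end.
Definition BWB (k j t : nat) : nat :=
  match t with 0 => (6*k+4) + 2*j | 1 => (14*k+6) - j | 2 => (13*k+6) - j | 3 => (2*k+2)+j
  | 4 => (11*k+5) - j | 5 => (4*k+3) + j | _ => (6*k+2) - j end.

Lemma PB_inj k j sg a b : j < k -> a < 7 -> b < 7 ->
  PB k j sg a %% (14*k+6).+1 = PB k j sg b %% (14*k+6).+1 -> a = b.
Proof.
move=> Hj Ha Hb.
have Hl : forall c, c < 7 -> PB k j sg c < (14*k+6).+1.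
  by move=> c Hc; case: sg; do 7?[case: c Hc => [|c] Hc] => /=; lia.
rewrite !modn_small ?Hl //.
by move: Hl; case: sg => _; do 7?[case: a Ha => [|a] Ha]; do 7?[case: b Hb => [|b] Hb] => //=; lia.
Qed.

Lemma PB_edge k j t : j < k -> t < 7 ->
  [/\ (PB k j false t + FWB k j t) %% (14*k+6).+1 = PB k j false (succ7 t) %% (14*k+6).+1,
      (PB k j false (succ7 t) + BWB k j t) %% (14*k+6).+1 = PB k j false t %% (14*k+6).+1,
      (PB k j true t + BWB k j t) %% (14*k+6).+1 = PB k j true (succ7 t) %% (14*k+6).+1 &
      (PB k j true (succ7 t) + FWB k j t) %% (14*k+6).+1 = PB k j true t %% (14*k+6).+1].
Proof.
move=> Hj Ht.
by do 7?[case: t Ht => [|t] Ht] => //; split; apply: modE => /=; lia.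
Qed.

Lemma FWB_lt k j t : j < k -> t < 7 -> FWB k j t < (14*k+6).+1.
Proof. by move=> Hj Ht; do 7?[case: t Ht => [|t] Ht] => //=; lia. Qed.
Lemma BWB_lt k j t : j < k -> t < 7 -> BWB k j t < (14*k+6).+1.
Proof. by move=> Hj Ht; do 7?[case: t Ht => [|t] Ht] => //=; lia. Qed.

Definition mults (k d : nat) : bool :=
  (d == 2*k+1) || (d == 4*k+2) || (d == 6*k+3) || (d == 8*k+4) || (d == 10*k+5) || (d == 12*k+6).

Lemma sumB k d : 0 < d < (14*k+6).+1 ->
  \sum_(j <- iota 0 k) \sum_(t <- iota 0 7) ((FWB k j t == d) + (BWB k j t == d)) + mults k d = 1.
Proof.
move=> Hd.
rewrite exch !big_cons big_nil addn0 !bsplit; cbv beta iota delta [FWB BWB mults].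
rewrite !S1 !S2 ?S3 ?S4; last (try (match goal with |- is_true (_ <= _) => lia end)); try (match goal with |- is_true (_ <= _) => lia end).
have : d <= k \/ (k < d <= 2*k) \/ (d == 2*k+1) \/ (2*k+1 < d <= 3*k+1) \/ (3*k+1 < d <= 4*k+1) \/ (d == 4*k+2)
  \/ (4*k+2 < d <= 5*k+2) \/ (5*k+2 < d <= 6*k+2) \/ (d == 6*k+3) \/ (6*k+3 < d <= 8*k+3) \/ (d == 8*k+4)
  \/ (8*k+4 < d <= 9*k+4) \/ (9*k+4 < d <= 10*k+4) \/ (d == 10*k+5) \/ (10*k+5 < d <= 11*k+5)
  \/ (11*k+5 < d <= 12*k+5) \/ (d == 12*k+6) \/ (12*k+6 < d <= 13*k+6) \/ 13*k+6 < d by lia.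
case: (boolP (odd d)) => Hodd.
  by case=> [H|[H|[H|[H|[H|[H|[H|[H|[H|[H|[H|[H|[H|[H|[H|[H|[H|[H|H]]]]]]]]]]]]]]]]]]; try (exfalso; lia); solve_bools.
by case=> [H|[H|[H|[H|[H|[H|[H|[H|[H|[H|[H|[H|[H|[H|[H|[H|[H|[H|H]]]]]]]]]]]]]]]]]]; try (exfalso; lia); solve_bools.
Qed.


Lemma FWA_lt k j t : j < k -> t < 7 -> FWA k j t < (14*k).+1.
Proof. by move=> Hj Ht; do 7?[case: t Ht => [|t] Ht] => //=; lia. Qed.
Lemma BWA_lt k j t : j < k -> t < 7 -> BWA k j t < (14*k).+1.
Proof. by move=> Hj Ht; do 7?[case: t Ht => [|t] Ht] => //=; lia. Qed.

Lemma modeq n (x y : 'I_n.+1) W : W < n.+1 ->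
  ((x + W) %% n.+1 == y) = (W == (y + n.+1 - x) %% n.+1).
Proof.
move=> HW.
have E : (x + (y + n.+1 - x)) %% n.+1 = y.
  have -> : x + (y + n.+1 - x) = y + n.+1 by have := ltn_ord x; lia.
  by rewrite modnDr modn_small.
by rewrite -{1}E eqn_modDl (modn_small HW).
Qed.

Lemma dd_pos n (x y : 'I_n.+1) : x != y -> 0 < (y + n.+1 - x) %% n.+1.
Proof.
move=> Hxy; rewrite lt0n; apply: contra Hxy => /eqP H.
have := @modeq n x y 0 (ltn0Sn n); rewrite H eqxx addn0 modn_small // => /eqP E.
Qed.


Lemma blk_shift_uniq n (P : nat -> nat) s :
  (forall a b, a < 7 -> b < 7 -> P a %% n.+1 = P b %% n.+1 -> a = b) ->
  uniq (mkblk n (fun t => P t + s)).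
Proof.
move=> H; apply: blk_uniq => a b Ha Hb E; apply: H => //.
by apply/eqP; rewrite -(eqn_modDr s); apply/eqP.
Qed.

Lemma cycB_uniq n K P b : (forall j sg a c, j < K -> a < 7 -> c < 7 ->
     P j sg a %% n.+1 = P j sg c %% n.+1 -> a = c) ->
  b \in cycB n K P -> uniq b.
Proof.
move=> H /flattenP[bs /mapP[j Hj ->]] /flattenP[bs' /mapP[sg _ ->]] /mapP[s _ ->].
apply: blk_shift_uniq => a c Ha Hc; apply: H => //.
by move: Hj; rewrite mem_iota.
Qed.

Lemma caseA k i : 0 < k -> 1 <= i <= 7 -> has_D_decomposition (14*k).+1 i.
Proof.
move=> k0 Hi.
exists (cycB (14*k) k (PA k)); split.
  by move=> b; apply: cycB_uniq => j sg a c Hj Ha Hc; apply: PA_inj.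
move=> x y Hxy.
rewrite (@cyc_count (14*k) k (PA k) (FWA k) (BWA k) i x y Hi); last first.
- by move=> j t Hj Ht; apply: PA_edge.
- by move=> j sg a c Hj Ha Hc; apply: PA_inj.
have Hd := dd_pos Hxy.
have Hd' : (y + (14*k).+1 - x) %% (14*k).+1 < (14*k).+1 by rewrite ltn_pmod.
rewrite -[RHS](@sumA k ((y + (14*k).+1 - x) %% (14*k).+1) k0); last by rewrite Hd.
rewrite big_seq [RHS]big_seq; apply: eq_bigr => j; rewrite mem_iota add0n => /andP[_ Hj].
rewrite big_seq [RHS]big_seq; apply: eq_bigr => t; rewrite mem_iota add0n => /andP[_ Ht].
by rewrite !modeq ?FWA_lt ?BWA_lt.
Qed.

Lemma dvd_mults k d : 0 < d < (14*k+6).+1 -> ((2*k+1) %| d) = mults k d.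
Proof.
move=> Hd; apply/idP/idP.
  case/dvdnP => q Eq.
  have q7 : q < 7.
    have : q * (2*k+1) < 7 * (2*k+1) by rewrite -Eq; lia.
    by rewrite ltn_pmul2r //; lia.
  rewrite /mults; do 7?[case: q q7 Eq => [|q] q7 Eq] => //=; lia.
rewrite /mults => /orP[/orP[/orP[/orP[/orP[H|H]|H]|H]|H]|H]; move/eqP: H => ->; apply/dvdnP.
- by exists 1; lia.
- by exists 2; lia.
- by exists 3; lia.
- by exists 4; lia.
- by exists 5; lia.
- by exists 6; lia.
Qed.

Lemma mods_iff k (x y : 'I_(14*k+6).+1) : x != y ->
  (x %% (2*k+1) == y %% (2*k+1)) = mults k ((y + (14*k+6).+1 - x) %% (14*k+6).+1).
Proof.
move=> Hxy.
have Hd := dd_pos Hxy.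
have Hd' : (y + (14*k+6).+1 - x) %% (14*k+6).+1 < (14*k+6).+1 by rewrite ltn_pmod.
rewrite -dvd_mults; last by rewrite Hd.
have Hm : (2*k+1) %| (14*k+6).+1 by apply/dvdnP; exists 7; lia.
rewrite /dvdn (modn_dvdm _ Hm).
have E : x + (y + (14*k+6).+1 - x) = 7 * (2*k+1) + y by have := ltn_ord x; lia.
have := eqn_modDl x (y + (14*k+6).+1 - x) 0 (2*k+1).
rewrite addn0 mod0n E modnMDl => <-.
by rewrite eq_sym.
Qed.

Lemma caseB k i : 1 <= i <= 7 -> has_D_decomposition (14*k+6).+1 i.
Proof.
move=> Hi.
have Hv : (14*k+6).+1 = 7 * (2*k+1) by lia.
have m0 : 0 < 2*k+1 by lia.
have /andP[HQ _] := k7chk_ok Hi.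
exists (cycB (14*k+6) k (PB k) ++ k7B (14*k+6) (2*k+1) (K7 i)); split.
  move=> b; rewrite mem_cat => /orP[|].
    by apply: cycB_uniq => j sg a c Hj Ha Hc; apply: PB_inj.
  move=> /flattenP[bs /mapP[s Hs ->]] /mapP[q Hq ->].
  have Hs' : s < 2*k+1 by move: Hs; rewrite mem_iota.
  have /andP[/andP[/eqP sq uq] aq] : qok q by move/allP: HQ; apply.
  have qlt : forall t, t < 7 -> nth 0 q t < 7.
    by move=> t Ht; apply: (allP aq); rewrite mem_nth // sq.
  apply: blk_uniq => a c Ha Hc.
  rewrite !modn_small ?Hv ?bnd ?qlt // => /eqP.
  rewrite eqn_add2l eqn_mul2l (negbTE (lt0n_neq0 m0)) /= => /eqP E.
  by apply/eqP; rewrite -(nth_uniq 0 _ _ uq) ?sq // E.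
move=> x y Hxy.
rewrite count_cat (@cyc_count (14*k+6) k (PB k) (FWB k) (BWB k) i x y Hi); last first.
- by move=> j t Hj Ht; apply: PB_edge.
- by move=> j sg a c Hj Ha Hc; apply: PB_inj.
rewrite (k7_count x y Hv Hi HQ).
have Hd := dd_pos Hxy.
have Hd' : (y + (14*k+6).+1 - x) %% (14*k+6).+1 < (14*k+6).+1 by rewrite ltn_pmod.
rewrite -[RHS](@sumB k ((y + (14*k+6).+1 - x) %% (14*k+6).+1)); last by rewrite Hd.
congr (_ + _).
  rewrite big_seq [RHS]big_seq; apply: eq_bigr => j; rewrite mem_iota add0n => /andP[_ Hj].
  rewrite big_seq [RHS]big_seq; apply: eq_bigr => t; rewrite mem_iota add0n => /andP[_ Ht].
  by rewrite !modeq ?FWB_lt ?BWB_lt.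
rewrite -mods_iff //.
case: eqP => Hxm.
  have Hx7 : x %/ (2*k+1) < 7 by rewrite ltn_divLR //; have := ltn_ord x; have := ltn_ord y; lia.
  have Hy7 : y %/ (2*k+1) < 7 by rewrite ltn_divLR //; have := ltn_ord x; have := ltn_ord y; lia.
  transitivity 1; last by [].
  rewrite -[RHS](@k7_one i (x %/ (2*k+1)) (y %/ (2*k+1)) Hi Hx7 Hy7); last first.
    apply: contra Hxy => /eqP E; apply/eqP; apply: val_inj.
    by rewrite /= (divn_eq x (2*k+1)) (divn_eq y (2*k+1)) E Hxm.
  by apply: eq_bigr => q _; apply: eq_bigr => t _.
by rewrite big1 // => q _; rewrite big1.
Qed.

Theorem corollary1p6 (v : nat) :
  7 <= v -> (v %% 14 == 1) || (v %% 14 == 7) ->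
  forall i : nat, 1 <= i <= 7 -> has_D_decomposition v i.
Proof.
move=> Hv Hm i Hi.
have := divn_eq v 14; move: (v %/ 14) => k Ev.
case/orP: Hm => /eqP Hr; rewrite Hr in Ev.
  rewrite (_ : v = (14*k).+1); last by lia.
  by apply: caseA => //; lia.
rewrite (_ : v = (14*k+6).+1); last by lia.
exact: caseB.
Qed.
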